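(* Let $p$ be a prime number and let $d>1$ be an integer. Let $T_d$ be the $d$-th Chebyshev polynomial of the first kind, viewed as a self-map of $\mathbb{A}^1(\mathbb{F}_p)=\mathbb{F}_p$ (coefficients reduced modulo $p$), and extended to $\mathbb{P}^1(\mathbb{F}_p)=\mathbb{F}_p\cup\{\infty\}$ by $T_d(\infty)=\infty$. Let $m^-$ be the largest divisor of $p-1$ that is relatively prime to $d$, and $m^+$ the largest divisor of $p+1$ that is relatively prime to $d$. Then $$\#\mathrm{Per}(T_d,\mathbb{A}^1(\mathbb{F}_p))=\frac{m^-+m^+}{2},\qquad \#\mathrm{Per}(T_d,\mathbb{P}^1(\mathbb{F}_p))=\frac{m^-+m^+}{2}+1.$$
   Context: The $d$-th Chebyshev polynomial of the first kind $T_d\in\mathbb{Z}[z]$ is the monic degree-$d$ polynomial satisfying $T_d(z+z^{-1})=z^d+z^{-d}$. For a self-map $f$ of a finite set $S$, a point $x$ is periodic if $f^n(x)=x$ for some $n\ge1$, and $\mathrm{Per}(f,S)$ is the set of periodic points of $f$ in $S$. *)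

(* Defs.v *)
From HB Require Import structures.
From mathcomp Require Import all_boot all_order all_algebra.
From mathcomp Require Import boolp.
Set Implicit Arguments. Unset Strict Implicit. Unset Printing Implicit Defensive.
Import GRing.Theory.
Local Open Scope ring_scope.

(* Normalized Chebyshev polynomials of the first kind (monic):
   T_0 = 2, T_1 = X, T_{n+2} = X T_{n+1} - T_n,
   so that T_d(z + z^-1) = z^d + z^-d. *)
Fixpoint cheb_pair (n : nat) : {poly int} * {poly int} :=
  match n with
  | 0%N => (2%:P, 'X)
  | n'.+1 => let: (a, b) := cheb_pair n' in (b, 'X * b - a)
  end.
Definition cheb (d : nat) : {poly int} := (cheb_pair d).1.

Definition chebA (p d : nat) (x : 'F_p) : 'F_p :=
  (map_poly (fun z : int => z%:~R) (cheb d)).[x].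

(* P^1(F_p) = F_p ∪ {∞}, with ∞ encoded as None, and T_d(∞) = ∞. *)
Definition chebP (p d : nat) (x : option 'F_p) : option 'F_p :=
  omap (@chebA p d) x.

Definition is_periodic (T : Type) (f : T -> T) (x : T) : Prop :=
  exists n : nat, (0 < n)%N /\ iter n f x = x.
Definition Per (T : finType) (f : T -> T) : {set T} :=
  [set x | `[< is_periodic f x >]].

Definition max_coprime_div (n d : nat) : nat :=
  (\max_(k < n.+1 | (k %| n)%N && coprime k d) k)%N.

(* Main.v *)
Require Import Defs.
From HB Require Import structures.
From mathcomp Require Import all_boot all_order all_algebra all_fingroup all_solvable all_field.
From mathcomp Require Import boolp.
From mathcomp Require Import ring zify.
Set Implicit Arguments. Unset Strict Implicit. Unset Printing Implicit Defensive.
Import GRing.Theory.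

Section Cheb.
Local Open Scope ring_scope.

Lemma cheb_rec n : cheb n.+2 = 'X * cheb n.+1 - cheb n.
Proof. by rewrite /cheb /=; case: (cheb_pair n) => a b. Qed.

Lemma cheb_eval (R : fieldType) (w : R) : w != 0 -> forall n,
  (map_poly (fun z : int => z%:~R) (cheb n)).[w + w^-1] = w ^+ n + (w ^+ n)^-1.
Proof.
move=> w0.
have H : forall n, (map_poly (fun z : int => z%:~R) (cheb n)).[w + w^-1] = w ^+ n + (w ^+ n)^-1
  /\ (map_poly (fun z : int => z%:~R) (cheb n.+1)).[w + w^-1] = w ^+ n.+1 + (w ^+ n.+1)^-1.
  elim=> [|n [IH1 IH2]].
    rewrite /cheb /= map_polyC map_polyX hornerC hornerX expr0 invr1 expr1; split => //.
  split => //; rewrite cheb_rec rmorphB rmorphM /= map_polyX hornerD hornerN hornerM hornerX IH1 IH2.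
  have un : w ^+ n != 0 by rewrite expf_neq0.
  rewrite !exprS !invfM; field; by rewrite un w0.
by move=> n; case: (H n).
Qed.
End Cheb.

Lemma mcd_spec n d : (0 < n)%N ->
  [/\ max_coprime_div n d %| n, coprime (max_coprime_div n d) d &
      forall k, k %| n -> coprime k d -> k %| max_coprime_div n d].
Proof.
move=> n0; rewrite /max_coprime_div.
have h1 : (1 < n.+1)%N by [].
rewrite (bigmax_eq_arg (Ordinal h1)); last by rewrite /= dvd1n coprime1n.
case: arg_maxnP => [|i /andP[di ci] Hmax]; first by rewrite /= dvd1n coprime1n.
split => // k dk ck.
have lk : (lcmn k i < n.+1)%N.
  rewrite ltnS dvdn_leq //; by rewrite dvdn_lcm dk di.
have cl : coprime (lcmn k i) d.
  apply: (@coprime_dvdl _ (k * i)); first by rewrite dvdn_lcm dvdn_mulr ?dvdn_mull.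
  by rewrite coprimeMl ck ci.
have := Hmax (Ordinal lk); rewrite /= cl dvdn_lcm dk di => /(_ isT) le.
have ip : (0 < i)%N by apply: (dvdn_gt0 n0 di).
have : lcmn k i = i.
  apply/eqP; rewrite eqn_leq le dvdn_leq // ?lcmn_gt0 ?dvdn_lcmr ?ip // andbT.
  by rewrite (dvdn_gt0 n0 dk).
by move=> <-; rewrite dvdn_lcml.
Qed.

Lemma fiber_bound (T U : finType) (f : T -> U) (A : {set T}) (B : {set U}) c :
  (forall x, x \in A -> f x \in B) ->
  (forall y, y \in B -> #|[set x in A | f x == y]| <= c) -> #|A| <= #|B| * c.
Proof.
move=> fAB Hc; rewrite -sum1_card (partition_big f (mem B)) //=.
rewrite -sum1_card big_distrl /=; apply: leq_sum => y yB.
rewrite mul1n; apply: leq_trans (Hc y yB); rewrite -sum1_card; apply: eq_leq.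
by apply: eq_bigl => x; rewrite inE.
Qed.

Lemma inPer (T : finType) (f : T -> T) x :
  x \in Per f <-> exists n, (0 < n)%N /\ iter n f x = x.
Proof. by rewrite inE; split => [/asboolP|h]; [|apply/asboolP]. Qed.

Lemma coprime_pred_pow d K : (0 < d)%N -> (0 < K)%N -> coprime (d ^ K).-1 d.
Proof.
move=> d0 K0; rewrite /coprime -dvdn1.
have g1 := dvdn_gcdl (d ^ K).-1 d.
have g3 : gcdn (d ^ K).-1 d %| d ^ K := dvdn_trans (dvdn_gcdr _ _) (dvdn_exp K0 (dvdnn d)).
by rewrite -(dvdn_addr 1 g1) addn1 prednK // expn_gt0 d0.
Qed.

Section Field.
Local Open Scope ring_scope.
Variables (p : nat) (L : finFieldType).
Hypotheses (hp : prime p) (chL : p \in [pchar L]) (cardL : #|L| = (p ^ 2)%N).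
Variable iota : {rmorphism 'F_p -> L}.

Definition psi (z : L) := z + z^-1.
Definition mu (k : nat) : {set L} := [set z | z ^+ k == 1].

Lemma roots_card (q : {poly L}) (A : {set L}) :
  q != 0 -> {in A, forall x, root q x} -> (#|A| < size q)%N.
Proof.
move=> q0 HA; rewrite cardE; apply: max_poly_roots => //; last exact: enum_uniq.
by apply/allP => x; rewrite mem_enum; exact: HA.
Qed.

Lemma mu_le k : (0 < k)%N -> (#|mu k| <= k)%N.
Proof.
move=> k0; have q0 : ('X^k - 1 : {poly L}) != 0.
  by rewrite -size_poly_eq0 size_Xn_sub_1.
have := roots_card q0 (A := mu k); rewrite size_Xn_sub_1 // ltnS; apply.
by move=> z; rewrite inE /root !hornerE subr_eq0.
Qed.

Lemma pow_dvd (z : L) k m : z ^+ k = 1 -> (k %| m)%N -> z ^+ m = 1.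
Proof. by move=> zk /dvdnP[c ->]; rewrite mulnC exprM zk expr1n. Qed.

Lemma pow_mod (z : L) k m : z ^+ k = 1 -> z ^+ m = z ^+ (m %% k).
Proof. by move=> zk; rewrite {1}(divn_eq m k) exprD mulnC exprM zk expr1n mul1r. Qed.

Lemma cardL1 : #|L|.-1 = (p.-1 * p.+1)%N.
Proof. rewrite cardL; have := prime_gt1 hp; case: p => // q _. rewrite expnS expn1 /=. lia. Qed.

Lemma unit_pow (z : L) : z != 0 -> z ^+ (#|L|.-1) = 1.
Proof.
move=> z0; have cL : (0 < #|L|)%N by rewrite cardL expn_gt0 prime_gt0.
apply: (mulfI z0); by rewrite mulr1 -exprS prednK // expf_card.
Qed.

Lemma mu_card k : (0 < k)%N -> (k %| #|L|.-1)%N -> #|mu k| = k.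
Proof.
move=> k0 kd; apply/eqP; rewrite eqn_leq mu_le //=.
set n := #|L|.-1 in kd *; set e := (n %/ k)%N.
have n0 : (0 < n)%N.
  rewrite /n cardL1 muln_gt0 /= andbT -ltnS prednK ?prime_gt1 // prime_gt0 //.
have ne : n = (e * k)%N by rewrite divnK.
have e0 : (0 < e)%N by move: n0; rewrite ne muln_gt0 => /andP[].
have cA : #|[set z : L | z != 0]| = n.
  by rewrite /n -(cardsC1 (0:L)); apply: eq_card => z; rewrite !inE.
have H := @fiber_bound L L (fun z => z ^+ e) [set z | z != 0] (mu k) e.
rewrite cA {1}ne in H.
have : (e * k <= e * #|mu k|)%N.
  rewrite [X in (_ <= X)%N]mulnC; apply: H.
    move=> z; rewrite !inE => z0; by rewrite -exprM -ne unit_pow.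
  move=> y yk; have q0 : ('X^e - y%:P : {poly L}) != 0.
    by rewrite -size_poly_eq0 size_XnsubC.
  rewrite -ltnS -(size_XnsubC y e0); apply: roots_card => // z.
  by rewrite !inE /root !hornerE subr_eq0 => /andP[_].
by rewrite leq_pmul2l.
Qed.


Lemma psi_eq z w : z != 0 -> w != 0 -> psi z = psi w -> w = z \/ w = z^-1.
Proof.
move=> z0 w0 e.
have E : (w - z) * (w - z^-1) = w * (psi w - psi z) by rewrite /psi; field; rewrite z0 w0.
move: E; rewrite e subrr mulr0 => /eqP; rewrite mulf_eq0 !subr_eq0 => /orP[/eqP|/eqP]; by [left|right].
Qed.

Lemma sq1 (z : L) : z * z = 1 -> z = 1 \/ z = -1.
Proof.
move=> e; have : (z - 1) * (z + 1) == 0 by rewrite mulrDr mulrBl e; apply/eqP; ring.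
rewrite mulf_eq0 subr_eq0 addr_eq0 => /orP[/eqP|/eqP]; by [left|right].
Qed.

Lemma fiber_sum (Q : {set L}) (B : {set L}) (f : L -> L) : (forall x, x \in Q -> f x \in B) ->
  #|Q| = (\sum_(y in B) #|[set z in Q | f z == y]|)%N.
Proof.
move=> fQ; rewrite -sum1_card (partition_big f (mem B)) //=.
apply: eq_bigr => y _; rewrite -sum1_card; apply: eq_bigl => x; by rewrite inE.
Qed.

Definition pm1 : {set L} := [set 1; -1].

Lemma inv_count (Q : {set L}) : 0 \notin Q -> (forall z, z \in Q -> z^-1 \in Q) ->
  (2 * #|psi @: Q|)%N = (#|Q| + #|Q :&: pm1|)%N.
Proof.
rewrite /pm1; move=> Q0 Qinv.
have sub1 : forall x, x \in Q -> psi x \in psi @: Q by move=> x xQ; apply: imset_f.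
have sub2 : forall x, x \in Q :&: [set 1; -1] -> psi x \in psi @: Q.
  by move=> x; rewrite inE => /andP[xQ _]; apply: sub1.
rewrite (fiber_sum sub1) (fiber_sum sub2) -big_split /= mulnC -sum_nat_const.
apply: eq_bigr => y /imsetP[z0 z0Q ->].
have z00 : z0 != 0 by apply: contraNneq Q0 => <-.
have F1 : [set z in Q | psi z == psi z0] = [set z0; z0^-1].
  apply/setP => z; rewrite !inE; apply/andP/orP.
    move=> [zQ /eqP e]; have z_0 : z != 0 by apply: contraNneq Q0 => <-.
    by case: (psi_eq z00 z_0 (esym e)) => ->; [left|right].
  by case=> /eqP ->; split => //; [apply: Qinv | rewrite /psi invrK addrC].
have F2 : [set z in Q :&: [set 1; -1] | psi z == psi z0] = [set z0; z0^-1] :&: [set 1; -1].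
  by rewrite -F1; apply/setP => z; rewrite !inE andbAC.
rewrite F1 F2.
have [e|ne] := eqVneq z0^-1 z0.
  have : z0 * z0 = 1 by rewrite -{1}e mulVf.
  move=> /sq1 h; have pm : z0 \in [set 1; -1] by case: h => ->; rewrite !inE eqxx ?orbT.
  by rewrite e setUid cards1 (setIidPl _) ?cards1 // sub1set.
have pm : z0 \notin [set 1; -1].
  apply: contra ne; rewrite !inE => /orP[/eqP ->|/eqP ->]; by rewrite ?invr1 ?invrN1.
rewrite cards2 eq_sym ne.
suff -> : [set z0; z0^-1] :&: [set 1; -1] = set0 by rewrite cards0.
apply/setP => z; rewrite !inE; apply/negbTE; apply/negP => /andP[/orP[/eqP ez|/eqP ez] h].
  by move: pm; rewrite !inE -ez h.
have zi : z^-1 = z by case/orP: h => /eqP ->; rewrite ?invr1 ?invrN1.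
have e2 : z0 = z by rewrite -(invrK z0) -ez zi.
by move: pm; rewrite !inE e2 h.
Qed.


Lemma mu_sub a b : (a %| b)%N -> mu a \subset mu b.
Proof. by move=> ab; apply/subsetP => z; rewrite !inE => /eqP za; apply/eqP; apply: pow_dvd za ab. Qed.

Lemma count_union a b : (0 < a)%N -> (0 < b)%N -> (a %| p.-1)%N -> (b %| p.+1)%N ->
  odd a = odd b -> (2 * #|psi @: (mu a :|: mu b)|)%N = (a + b)%N.
Proof.
move=> a0 b0 ad bd oab.
have p1 : (0 < p.-1)%N by rewrite -ltnS prednK ?prime_gt1 ?prime_gt0.
rewrite inv_count.
- have -> : (mu a :|: mu b) :&: pm1 = mu a :&: mu b.
    apply/setP => z; rewrite !inE; apply/andP/andP.
      have sg : (-1 : L) ^+ a = (-1) ^+ b by rewrite -[LHS]signr_odd -[RHS]signr_odd oab.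
      case=> /orP[] /eqP h /orP[] /eqP zz; move: h; rewrite zz ?expr1n // ?sg -?sg => ->; by [].
    case=> /eqP za /eqP zb; split; first by rewrite za eqxx.
    have z1 : z ^+ p.-1 = 1 by apply: pow_dvd za ad.
    have z2 : z ^+ p.+1 = 1 by apply: pow_dvd zb bd.
    have : z * z = 1.
      move: z2; rewrite -(prednK (prime_gt0 hp)) !exprS z1 mulr1 => h.
      by rewrite -h; ring.
    by case/sq1 => ->; rewrite eqxx ?orbT.
  rewrite cardsUI !mu_card //.
    by apply: dvdn_trans bd _; rewrite cardL1 dvdn_mull.
  by apply: dvdn_trans ad _; rewrite cardL1 dvdn_mulr.
- by rewrite !inE !expr0n gtn_eqF // gtn_eqF // eq_sym oner_eq0.
move=> z; rewrite !inE => /orP[] /eqP h; by rewrite !exprVn h invr1 eqxx ?orbT.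
Qed.


Lemma Fp_pow (x : 'F_p) : x ^+ p = x.
Proof. have := expf_card x; by rewrite card_Fp. Qed.

Lemma frob_fixed y : y ^+ p = y -> y \in iota @: [set: 'F_p].
Proof.
move=> yp; apply/negPn/negP => ny.
have p2 := prime_gt1 hp.
have q0 : ('X^p - 'X : {poly L}) != 0.
  rewrite -size_poly_eq0 size_polyDl ?size_polyXn // size_polyN size_polyX //.
have sq : size ('X^p - 'X : {poly L}) = p.+1.
  by rewrite size_polyDl ?size_polyXn // size_polyN size_polyX.
suff : (#|y |: iota @: [set: 'F_p]| < p.+1)%N.
  rewrite cardsU1 ny card_imset; last exact: fmorph_inj.
  by rewrite cardsT card_Fp // ltnn.
rewrite -sq; apply: roots_card => //.
move=> z; rewrite !inE /root !hornerE subr_eq0 => /orP[/eqP ->|/imsetP[x _ ->]].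
  by rewrite yp.
by rewrite -rmorphXn Fp_pow.
Qed.

Lemma mu_nz k z : (0 < k)%N -> z \in mu k -> z != 0.
Proof. by move=> k0; apply: contraTneq => ->; rewrite inE expr0n gtn_eqF // eq_sym oner_eq0. Qed.

Lemma pm1_gt0 : (0 < p.-1)%N.
Proof. by rewrite -ltnS prednK ?prime_gt1 ?prime_gt0. Qed.

Lemma S_nz z : z \in mu p.-1 :|: mu p.+1 -> z != 0.
Proof. by rewrite inE => /orP[]; apply: mu_nz; rewrite ?pm1_gt0. Qed.

Lemma psi_in z : z \in mu p.-1 :|: mu p.+1 -> psi z \in iota @: [set: 'F_p].
Proof.
move=> zS; apply: frob_fixed.
have z0 : z != 0 by apply: S_nz.
have pf : forall u : L, u ^+ p = pFrobenius_aut chL u by [].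
rewrite /psi pf (pFrobenius_autD_comm _ (mulrC _ _)) -!pf exprVn.
have [zp|zp] : z ^+ p = z \/ z ^+ p = z^-1.
  move: zS; rewrite !inE -(prednK (prime_gt0 hp)) /= => /orP[] /eqP h.
    by left; rewrite exprS h mulr1.
  right; move: h; rewrite exprS => h; apply: (mulfI z0); by rewrite h divff.
  by rewrite zp.
by rewrite zp invrK addrC.
Qed.


Lemma psi_surj : psi @: (mu p.-1 :|: mu p.+1) = iota @: [set: 'F_p].
Proof.
apply/eqP; rewrite eqEcard; apply/andP; split.
  by apply/subsetP => y /imsetP[z zS ->]; apply: psi_in.
rewrite (card_imset _ (fmorph_inj iota)) cardsT card_Fp //.
have := count_union pm1_gt0 (ltn0Sn p) (dvdnn _) (dvdnn _).
have -> : odd p.-1 = odd p.+1 by rewrite -(prednK (prime_gt0 hp)) /= negbK.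
move=> /(_ erefl) h.
have : (2 * p <= 2 * #|psi @: (mu p.-1 :|: mu p.+1)|)%N.
  by rewrite h -(prednK (prime_gt0 hp)) /=; lia.
by rewrite leq_pmul2l.
Qed.

Lemma cheb_iota d x z : z != 0 -> iota x = psi z -> iota (chebA d x) = psi (z ^+ d).
Proof.
move=> z0 e; rewrite /chebA -horner_map -map_poly_comp e /psi -cheb_eval //.
congr (_.[_]); apply: eq_map_poly => k /=; by rewrite rmorph_int.
Qed.

Lemma iter_iota d x z n : z != 0 -> iota x = psi z ->
  iota (iter n (@chebA p d) x) = psi (z ^+ (d ^ n)).
Proof.
move=> z0 e; elim: n => [|n IH]; first by rewrite expn0 expr1.
by rewrite iterS (cheb_iota _ _ IH) ?expf_neq0 // expnSr exprM.
Qed.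


Lemma key_mu z q d N : (0 < q)%N -> z ^+ q = 1 -> z ^+ N = 1 -> coprime N d ->
  z \in mu (max_coprime_div q d).
Proof.
move=> q0 zq zN cN; have [a _ ha] := Bezoutl N q0.
have : z ^+ (gcdn q N + a * N) = 1 by apply: pow_dvd zq ha.
rewrite exprD mulnC exprM zN expr1n mulr1 => zg.
have [_ _ H] := mcd_spec d q0.
rewrite inE; apply/eqP; apply: pow_dvd zg _; apply: H; first exact: dvdn_gcdl.
by apply: coprime_dvdl cN; apply: dvdn_gcdr.
Qed.

Lemma per_eq d : (1 < d)%N ->
  iota @: Per (@chebA p d) = psi @: (mu (max_coprime_div p.-1 d) :|: mu (max_coprime_div p.+1 d)).
Proof.
move=> d1; have d0 : (0 < d)%N by apply: ltnW.
have [s1 c1 _] := mcd_spec d pm1_gt0.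
have [s2 c2 _] := mcd_spec d (ltn0Sn p).
apply/setP => y; apply/idP/idP.
  move=> /imsetP[x /inPer [n [n0 hx]] ->].
  have : iota x \in iota @: [set: 'F_p] by apply: imset_f; rewrite inE.
  rewrite -psi_surj => /imsetP[z zS ex].
  have z0 := S_nz zS.
  have e1 : psi z = psi (z ^+ (d ^ n)) by rewrite -(iter_iota _ _ z0 ex) hx.
  have zN : z ^+ (d ^ (n + n)) = z.
    rewrite expnD exprM; case: (psi_eq z0 (expf_neq0 _ z0) e1) => h.
      by rewrite !h.
    by rewrite h exprVn h invrK.
  have zN1 : z ^+ (d ^ (n + n)).-1 = 1.
    apply: (mulfI z0); rewrite mulr1 -exprS prednK ?zN //.
    by rewrite expn_gt0 d0.
  have cN := coprime_pred_pow d0 (_ : (0 < n + n)%N).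
  rewrite ex; apply: imset_f; case/setUP: zS; rewrite inE => /eqP zq.
    by rewrite inE (key_mu pm1_gt0 zq zN1) // cN // addn_gt0 n0.
  by rewrite inE (key_mu (ltn0Sn p) zq zN1) ?orbT // cN // addn_gt0 n0.
move=> /imsetP[z zP ->].
have zS : z \in mu p.-1 :|: mu p.+1.
  case/setUP: zP => h; rewrite inE.
    by rewrite (subsetP (mu_sub s1)).
  by rewrite (subsetP (mu_sub s2)) ?orbT.
have z0 := S_nz zS.
have := psi_in zS => /imsetP[x _ ex].
rewrite ex; apply: imset_f; apply/inPer.
have [m [m0 cm zm]] : exists m, [/\ (0 < m)%N, coprime m d & z ^+ m = 1].
  move: zP; rewrite !inE => /orP[] /eqP h.
    by exists (max_coprime_div p.-1 d); split => //; apply: dvdn_gt0 s1; apply: pm1_gt0.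
  by exists (max_coprime_div p.+1 d); split => //; apply: dvdn_gt0 s2.
exists (totient m); split; first by rewrite totient_gt0.
apply: (fmorph_inj iota); rewrite (iter_iota _ _ z0 (esym ex)) -ex (pow_mod _ zm).
have := Euler_exp_totient (_ : coprime d m); rewrite coprime_sym cm => /(_ isT) ->.
by rewrite -(pow_mod _ zm).
Qed.

End Field.

Lemma mcd_odd p d : prime p -> odd (max_coprime_div p.-1 d) = odd (max_coprime_div p.+1 d).
Proof.
move=> hp.
have key : forall n, (0 < n)%N -> (2 %| max_coprime_div n d) = (2 %| n) && odd d.
  move=> n n0; have [s c H] := mcd_spec d n0; apply/idP/andP.
    move=> h2; split; first exact: dvdn_trans h2 s.
    by rewrite -coprime2n; exact: coprime_dvdl h2 c.
  by case=> h1 h2; apply: H h1 _; rewrite coprime2n.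
have oE : forall x, odd x = ~~ (2 %| x) by move=> x; rewrite dvdn2 negbK.
have p1 : (0 < p.-1)%N by rewrite -ltnS prednK ?prime_gt1 ?prime_gt0.
rewrite !oE !key //; congr (~~ (_ && _)).
by rewrite !dvdn2 -(prednK (prime_gt0 hp)) /= negbK.
Qed.

Lemma iterP p d n x : iter n (@chebP p d) (Some x) = Some (iter n (@chebA p d) x).
Proof. by elim: n => [|n IH] //=; rewrite IH. Qed.

Lemma PerP p d : Per (@chebP p d) = None |: (Some @: Per (@chebA p d)).
Proof.
apply/setP => -[x|]; rewrite in_setU1.
  rewrite (mem_imset _ _ (@Some_inj _)) /=; apply/idP/idP.
    by move/inPer => [n [n0 h]]; apply/inPer; exists n; split => //; move: h; rewrite iterP => -[].
  by move/inPer => [n [n0 h]]; apply/inPer; exists n; split => //; rewrite iterP h.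
by rewrite eqxx /=; apply/inPer; exists 1%N.
Qed.

Theorem mainTheorem1 (p d : nat) (hp : prime p) (hd : (1 < d)%N) :
  let mminus := max_coprime_div p.-1 d in
  let mplus := max_coprime_div p.+1 d in
  #|Per (@chebA p d)| = ((mminus + mplus) %/ 2)%N /\
  #|Per (@chebP p d)| = ((mminus + mplus) %/ 2).+1%N.
Proof.
move=> mm mp.
have [Fm chF cardF] := pPrimePowerField hp (isT : (0 < 2)%N).
pose L : finFieldType := pPrimeCharType chF.
have chL : p \in [pchar L]%R by [].

have cardL : #|L| = (p ^ 2)%N by [].
have p1 : (0 < p.-1)%N by rewrite -ltnS prednK ?prime_gt1 ?prime_gt0.
have [s1 _ _] := mcd_spec d p1.
have [s2 _ _] := mcd_spec d (ltn0Sn p).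

have H := count_union hp chL cardL (dvdn_gt0 p1 s1) (dvdn_gt0 (ltn0Sn p) s2) s1 s2 (mcd_odd d hp).
have E : #|Per (@chebA p d)| = ((mm + mp) %/ 2)%N.
  rewrite -(card_imset _ (fmorph_inj (in_alg L))) (per_eq hp chL cardL) //.
  by rewrite -H mulKn.
split => //.
rewrite PerP cardsU1 card_imset; last exact: Some_inj.
suff -> : None \notin [set Some x | x in Per (@chebA p d)] by rewrite E.
by apply/negP => /imsetP[].
Qed.
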